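(* Let $G$ be a finite simple graph and let $D$ be an open irredundant dominating set of $G$. Then for any finite simple graph $H$, the set $D \times V(H)$ is an open irredundant, minimal dominating set of the Cartesian product $G \,\square\, H$.
   Context: For $u\in A\subseteq V(G)$, the external private neighborhood of $u$ with respect to $A$ is $\mathrm{epn}[u,A]=N(u)-N[A-\{u\}]$, the set of vertices outside $A$ adjacent to $u$ and to no other vertex of $A$. A set $A$ is open irredundant if $\mathrm{epn}[u,A]\neq\emptyset$ for every $u\in A$. The Cartesian product $G\,\square\, H$ has vertex set $V(G)\times V(H)$, with $(g_1,h_1)$ adjacent to $(g_2,h_2)$ iff either ($g_1=g_2$ and $h_1h_2\in E(H)$) or ($h_1=h_2$ and $g_1g_2\in E(G)$). *)

(* Defs.v *)
(* A finite simple graph is a vertex finType T with an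
   adjacency relation e : rel T that is symmetric and irreflexive. *)
From mathcomp Require Import all_boot.
Set Implicit Arguments. Unset Strict Implicit. Unset Printing Implicit Defensive.

Section Graphs.
Variable T : finType.
Variable e : rel T.

Definition nbh (u : T) : {set T} := [set v | e u v].
Definition cnbh (u : T) : {set T} := u |: nbh u.
Definition cnbhS (A : {set T}) : {set T} := \bigcup_(a in A) cnbh a.
Definition epn (u : T) (A : {set T}) : {set T} := nbh u :\: cnbhS (A :\ u).
Definition open_irredundant (A : {set T}) : Prop :=
  forall u, u \in A -> epn u A != set0.
Definition dominating (A : {set T}) : Prop :=
  forall v : T, v \in A \/ exists2 u, u \in A & e u v.
Definition minimal_dominating (A : {set T}) : Prop :=
  dominating A /\ forall B : {set T}, B \proper A -> ~ dominating B.
End Graphs.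

Definition cart_rel (T1 T2 : finType) (eG : rel T1) (eH : rel T2) : rel (T1 * T2) :=
  fun x y => ((x.1 == y.1) && eH x.2 y.2) || ((x.2 == y.2) && eG x.1 y.1).

(* Main.v *)
Require Import Defs.
From mathcomp Require Import all_boot.

Lemma epn_facts (TG : finType) (eG : rel TG) (eG_irr : irreflexive eG)
  (D : {set TG}) u w : u \in D ->
  w \in epn eG u D -> [/\ eG u w, w \notin D & forall x, x \in D -> eG x w -> x = u].
Proof.
move=> uD; rewrite /epn in_setD => /andP[wC wN]; rewrite /nbh inE in wN.
have wu : w != u by apply/eqP=> E; subst; rewrite eG_irr in wN.
have H : forall x, x \in D -> x != u -> (w == x) || eG x w = false.
  move=> x xD xu; apply/negbTE; apply: contra wC => H.
  apply/bigcupP; exists x; first by rewrite !inE xu xD.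
  by rewrite /cnbh /nbh !inE.
split=> //.
  apply/negP=> wD; have := H w wD wu; by rewrite eqxx.
move=> x xD ex; apply/eqP; apply/negPn/negP=> xu.
by have := H x xD xu; rewrite ex orbT.
Qed.

Theorem lemma14 (TG : finType) (eG : rel TG)
  (eG_sym : symmetric eG) (eG_irr : irreflexive eG)
  (D : {set TG}) (hD_oir : open_irredundant eG D) (hD_dom : dominating eG D)
  (TH : finType) (eH : rel TH) (eH_sym : symmetric eH) (eH_irr : irreflexive eH) :
  open_irredundant (cart_rel eG eH) (setX D [set: TH]) /\
  minimal_dominating (cart_rel eG eH) (setX D [set: TH]).
Proof.
have key : forall u, u \in D -> exists w, [/\ eG u w, w \notin D & forall x, x \in D -> eG x w -> x = u].
  move=> u uD; have /set0Pn[w wE] := hD_oir u uD.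
  by exists w; exact: (@epn_facts TG eG eG_irr D u w uD wE).
split.
  move=> [u h]; rewrite !inE /= ?andbT => uD.
  have [w [euw wD wx]] := key u uD.
  apply/set0Pn; exists (w, h); rewrite /epn !inE /cart_rel /= eqxx euw orbT /=.
  rewrite andbT; apply/bigcupP=> -[[x y]]; rewrite !inE /= andbT => /andP[xyuh xD].
  case/or3P.
  - by move/eqP=> [E _]; subst; rewrite xD in wD.
  - by case/andP=> /eqP E _; subst; rewrite xD in wD.
  - case/andP=> /eqP E ex; subst; have := wx x xD ex => E; subst.
    by rewrite eqxx in xyuh.
split.
  move=> [v h]; case: (hD_dom v) => [vD|[u uD euv]].
    by apply: or_introl; rewrite !inE vD.
  apply: or_intror; exists (u, h); first by rewrite !inE uD.
  by rewrite /cart_rel /= eqxx euv orbT.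
move=> B /properP[/subsetP sub [[u h] uhA uhB]] Bdom.
move: uhA; rewrite !inE /= ?andbT => uD.
have [w [euw wD wx]] := key u uD.
case: (Bdom (w, h)) => [wB|[[x y] xyB]].
  by have := sub _ wB; rewrite !inE /= (negbTE wD).
have := sub _ xyB; rewrite !inE /= ?andbT => xD.
rewrite /cart_rel /= => /orP[]/andP[/eqP E ex]; subst.
  by rewrite xD in wD.
have E := wx x xD ex; subst. by rewrite xyB in uhB.
Qed.
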